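(* Let $n\ge 2$ and $K\ge2$. The holomorphic map $\Phi_K=\pi_n\circ\Psi_K\colon(\mathbb{C}^{n(n-1)/2})^K\to\mathbb{C}^n\setminus\{0\}$ is a submersion (i.e. its differential has rank $n$) at a point $Z=(Z_1,\dots,Z_K)$ if and only if $Z\notin S_K$.
   Context: For $k\ge1$, $M_k\colon\mathbb{C}^{n(n-1)/2}\to\mathrm{SL}_n(\mathbb{C})$ is defined as follows: if $k$ is even, $Z_k=(z_{ij,k})_{1\le i<j\le n}$ and $M_k(Z_k)$ is the upper triangular unipotent matrix with $1$'s on the diagonal and entry $z_{ij,k}$ in position $(i,j)$, $i<j$; if $k$ is odd, $Z_k=(z_{ij,k})_{1\le j<i\le n}$ and $M_k(Z_k)$ is the lower triangular unipotent matrix with $1$'s on the diagonal and entry $z_{ij,k}$ in position $(i,j)$, $i>j$. Define $\Psi_K(Z_1,\dots,Z_K)=M_1(Z_1)^{-1}M_2(Z_2)^{-1}\cdots M_K(Z_K)^{-1}$, and let $\pi_n\colon\mathrm{SL}_n(\mathbb{C})\to\mathbb{C}^n\setminus\{0\}$ send a matrix to its last row. Define $$S_K=\bigcap_{\substack{1\le k<K\\ k\text{ odd}}}\{z_{n1,k}=\dots=z_{n(n-1),k}=0\}\ \cap\ \bigcap_{\substack{1\le k<K\\ k\text{ even}}}\{z_{1n,k}=\dots=z_{(n-1)n,k}=0\}\subset(\mathbb{C}^{n(n-1)/2})^K,$$ i.e. the set where the last row of every lower triangular factor $M_k$, $k<K$ odd, and the last column of every upper triangular factor $M_k$, $k<K$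 even, have all off-diagonal entries $0$ (no condition on $Z_K$). *)

(* Defs.v *)
From HB Require Import structures.
From mathcomp Require Import all_boot all_order all_algebra.
Set Implicit Arguments. Unset Strict Implicit. Unset Printing Implicit Defensive.
Import Order.TTheory GRing.Theory Num.Theory.
Local Open Scope ring_scope.

(* Index set {(i,j) : i < j} of the n(n-1)/2 coordinates of one factor
   (0-indexed: 'I_n stands for {1,...,n}). *)
Definition Pairs (n : nat) := {p : 'I_n * 'I_n | (p.1 < p.2)%N}.

Section Defs.
Variable R : comUnitRingType.
Variable n : nat.

Definition zget (z : {ffun Pairs n -> R}) (i j : 'I_n) : R :=
  oapp z 0 (insub (i, j)).

(* M_k(Z_k), k >= 1 (1-indexed).  For k even: upper unipotent, entry (i,j),
   i<j, is z_{ij,k} stored at pair (i,j).  For k odd: lower unipotent, entry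
   (i,j), i>j, is z_{ij,k} stored at pair (j,i). *)
Definition Mk (k : nat) (z : {ffun Pairs n -> R}) : 'M[R]_n :=
  \matrix_(i, j)
    if i == j then 1
    else if odd k then (if (j < i)%N then zget z j i else 0)
    else (if (i < j)%N then zget z i j else 0).

(* Psi_K(Z) = M_1(Z_1)^-1 M_2(Z_2)^-1 ... M_K(Z_K)^-1 ; factor k : 'I_K is M_{k+1} *)
Definition PsiK (K : nat) (Z : {ffun 'I_K -> {ffun Pairs n -> R}}) : 'M[R]_n :=
  foldr (fun (k : 'I_K) (A : 'M[R]_n) => invmx (Mk k.+1 (Z k)) *m A) 1%:M (enum 'I_K).

End Defs.

Definition lastrow (R : Type) (m : nat) : 'M[R]_m -> 'rV[R]_m :=
  match m as m0 return 'M[R]_m0 -> 'rV[R]_m0 with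
  | 0 => fun A => \row_j (A j j)
  | m'.+1 => fun A => row ord_max A
  end.

Definition PhiK (R : comUnitRingType) (n K : nat)
  (Z : {ffun 'I_K -> {ffun Pairs n -> R}}) : 'rV[R]_n :=
  lastrow (PsiK Z).

(* Differential of the polynomial map Phi_K at Z in direction W:
   the coefficient of t in Phi_K(Z + t W), computed over C[t]. *)
Definition dPhiK (C : fieldType) (n K : nat)
  (Z W : {ffun 'I_K -> {ffun Pairs n -> C}}) : 'rV[C]_n :=
  let ZtW : {ffun 'I_K -> {ffun Pairs n -> {poly C}}} :=
    [ffun k => [ffun p => (Z k p)%:P + W k p *: 'X]] in
  \row_j ((PhiK ZtW) 0 j)`_1.

(* Z \in S_K : for every k < K, the off-diagonal entries of the last row
   (k odd) resp. last column (k even) of M_k vanish; in both cases these are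
   exactly the coordinates at pairs (j, n) (0-indexed: second index n-1). *)
Definition in_SK (C : Type) (n K : nat) (Z : {ffun 'I_K -> {ffun Pairs n -> C}})
  (zero : C) : Prop :=
  forall k : 'I_K, (k.+1 < K)%N ->
    forall p : Pairs n, val (val p).2 = n.-1 -> Z k p = zero.

(* Main.v *)
Require Import Defs.
From HB Require Import structures.
From mathcomp Require Import all_boot all_order all_algebra.
From Stdlib Require Import Classical.
Import Order.TTheory GRing.Theory Num.Theory.
Set Implicit Arguments. Unset Strict Implicit. Unset Printing Implicit Defensive.
Local Open Scope ring_scope.

Section Coef.
Variable C : fieldType.
Variable n : nat.

Definition c0 (A : 'M[{poly C}]_n) : 'M[C]_n := map_mx (fun p : {poly C} => p`_0) A.
Definition c1 (A : 'M[{poly C}]_n) : 'M[C]_n := map_mx (fun p : {poly C} => p`_1) A.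

Lemma coef1M (p q : {poly C}) : (p * q)`_1 = p`_0 * q`_1 + p`_1 * q`_0.
Proof. by rewrite coefM big_ord_recl big_ord1. Qed.

Lemma c0M A B : c0 (A *m B) = c0 A *m c0 B.
Proof.
apply/matrixP=> i j; rewrite !mxE coef_sum; apply: eq_bigr => l _.
by rewrite coef0M !mxE.
Qed.

Lemma c1M A B : c1 (A *m B) = c0 A *m c1 B + c1 A *m c0 B.
Proof.
apply/matrixP=> i j; rewrite !mxE coef_sum -big_split /=; apply: eq_bigr => l _.
by rewrite coef1M !mxE.
Qed.

Lemma c0_1 : c0 1%:M = 1%:M.
Proof. by apply/matrixP=> i j; rewrite !mxE; case: (i == j); rewrite /= ?coef1 ?coef0. Qed.

Lemma c1_1 : c1 1%:M = 0.
Proof. by apply/matrixP=> i j; rewrite !mxE; case: (i == j); rewrite /= ?coef1 ?coef0. Qed.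

Lemma c01_inv (A : 'M[{poly C}]_n) : A \in unitmx ->
  c0 (invmx A) = invmx (c0 A) /\
  c1 (invmx A) = - (invmx (c0 A) *m c1 A *m invmx (c0 A)).
Proof.
move=> uA.
have h1 : c0 A *m c0 (invmx A) = 1%:M by rewrite -c0M mulmxV // c0_1.
have h2 : c0 (invmx A) *m c0 A = 1%:M by rewrite -c0M mulVmx // c0_1.
have [u0 _] := mulmx1_unit h1.
have e0 : c0 (invmx A) = invmx (c0 A).
  by rewrite -[LHS]mul1mx -(mulVmx u0) -mulmxA h1 mulmx1.
split=> //.
have h3 : c0 A *m c1 (invmx A) + c1 A *m c0 (invmx A) = 0 by rewrite -c1M mulmxV // c1_1.
have : invmx (c0 A) *m (c0 A *m c1 (invmx A) + c1 A *m c0 (invmx A)) = 0 by rewrite h3 mulmx0.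
rewrite mulmxDr mulmxA mulVmx // mul1mx e0 => /eqP; rewrite addr_eq0 => /eqP ->.
by rewrite mulmxA.
Qed.

End Coef.

Lemma zget_lt (R : comUnitRingType) n (z : {ffun Pairs n -> R}) (i j : 'I_n)
  (lt : (i < j)%N) : zget z i j = z (exist _ (i, j) lt).
Proof.
rewrite /zget; case: insubP => [p Pp vp|]; last by rewrite lt.
by congr (z _); apply: val_inj.
Qed.

Lemma zget_ge (R : comUnitRingType) n (z : {ffun Pairs n -> R}) (i j : 'I_n) :
  ~~ (i < j)%N -> zget z i j = 0.
Proof. by move=> h; rewrite /zget insubF //; apply/negbTE. Qed.

Lemma Mk_unit (R : comUnitRingType) n k (z : {ffun Pairs n -> R}) :
  Mk k z \in unitmx.
Proof.
rewrite unitmxE.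
have -> : \det (Mk k z) = 1.
  case: (boolP (odd k)) => ok.
    rewrite det_trig; last first.
      apply/is_trig_mxP=> i j lij; rewrite mxE ok.
      by rewrite (_ : (i == j) = false) ?ltnNge ?(ltnW lij) //; apply/eqP=> e; move: lij; rewrite e ltnn.
    by rewrite big1 // => i _; rewrite mxE eqxx.
  rewrite -det_tr det_trig; last first.
    apply/is_trig_mxP=> i j lij; rewrite !mxE (negbTE ok).
    by rewrite (_ : (j == i) = false) ?ltnNge ?(ltnW lij) //; apply/eqP=> e; move: lij; rewrite e ltnn.
  by rewrite big1 // => i _; rewrite !mxE eqxx.
exact: unitr1.
Qed.

Section Struct.
Variable C : fieldType.
Variable n : nat.
Local Notation L := (@ord_max n).
Definition eL : 'rV[C]_n.+1 := delta_mx 0 L.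
Definition colL (X : 'M[C]_n.+1) := forall y : 'rV_n.+1, (y *m X) 0 L = y 0 L.
Definition rowL (X : 'M[C]_n.+1) := eL *m X = eL.
Definition good (z : {ffun Pairs n.+1 -> C}) :=
  forall p : Pairs n.+1, val (val p).2 = n -> z p = 0.
Definition Nk (k : nat) (z : {ffun Pairs n.+1 -> C}) : 'M[C]_n.+1 :=
  \matrix_(i, j)
    if i == j then 0
    else if odd k then (if (j < i)%N then zget z j i else 0)
    else (if (i < j)%N then zget z i j else 0).

Lemma eLmul (X : 'M[C]_n.+1) : eL *m X = row L X.
Proof. by rewrite /eL rowE. Qed.

Lemma colL_entries (X : 'M[C]_n.+1) : (forall i, X i L = (i == L)%:R) -> colL X.
Proof.
move=> h y; rewrite !mxE (bigD1 L) //= big1 ?addr0 ?h ?eqxx ?mulr1 //.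
by move=> i /negbTE ni; rewrite h ni mulr0.
Qed.

Lemma rowL_entries (X : 'M[C]_n.+1) : (forall j, X L j = (L == j)%:R) -> rowL X.
Proof.
move=> h; rewrite /rowL eLmul; apply/rowP=> j; rewrite !mxE h.
by rewrite eq_sym.
Qed.

Lemma colL1 : colL 1%:M. Proof. by move=> y; rewrite mulmx1. Qed.
Lemma rowL1 : rowL 1%:M. Proof. by rewrite /rowL mulmx1. Qed.
Lemma colLM (X Y : 'M[C]_n.+1) : colL X -> colL Y -> colL (X *m Y).
Proof. by move=> hX hY y; rewrite mulmxA hY hX. Qed.
Lemma rowLM (X Y : 'M[C]_n.+1) : rowL X -> rowL Y -> rowL (X *m Y).
Proof. by move=> hX hY; rewrite /rowL mulmxA hX hY. Qed.
Lemma colL_inv (X : 'M[C]_n.+1) : X \in unitmx -> colL X -> colL (invmx X).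
Proof. by move=> u hX y; rewrite -hX -mulmxA mulVmx ?mulmx1. Qed.
Lemma rowL_inv (X : 'M[C]_n.+1) : X \in unitmx -> rowL X -> rowL (invmx X).
Proof. by move=> u hX; rewrite /rowL -{1}hX -mulmxA mulmxV ?mulmx1. Qed.

Lemma ltL (i : 'I_n.+1) : i != L -> (i < L)%N.
Proof.
move=> h; rewrite ltn_neqAle -ltnS ltn_ord andbT; apply: contra h => /eqP e.
by apply/eqP/val_inj.
Qed.

Lemma Mk_colL_odd k (z : {ffun Pairs n.+1 -> C}) : odd k -> colL (Mk k z).
Proof.
move=> ok; apply: colL_entries => i; rewrite mxE ok.
case: eqP => [_|_] //.
by rewrite ltnNge leq_ord.
Qed.

Lemma Mk_rowL_even k (z : {ffun Pairs n.+1 -> C}) : ~~ odd k -> rowL (Mk k z).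
Proof.
move=> ok; apply: rowL_entries => j; rewrite mxE (negbTE ok).
case: eqP => [_|_] //.
by rewrite ltnNge leq_ord.
Qed.

Lemma good_zget (z : {ffun Pairs n.+1 -> C}) : good z -> forall j, zget z j L = 0.
Proof.
move=> g j; case: (boolP (j < L)%N) => lt; last by rewrite zget_ge.
by rewrite zget_lt; apply: g.
Qed.

Lemma Mk_rowL_good k (z : {ffun Pairs n.+1 -> C}) : good z -> rowL (Mk k z).
Proof.
move=> g; case: (boolP (odd k)) => ok; last exact: Mk_rowL_even.
apply: rowL_entries => j; rewrite mxE ok.
case: eqP => [_|_] //.
by rewrite good_zget //; case: ifP.
Qed.

Lemma Mk_colL_good k (z : {ffun Pairs n.+1 -> C}) : good z -> colL (Mk k z).
Proof.
move=> g; case: (boolP (odd k)) => ok; first exact: Mk_colL_odd.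
apply: colL_entries => i; rewrite mxE (negbTE ok).
case: eqP => [_|_] //.
by rewrite good_zget //; case: ifP.
Qed.

Lemma Nk_LL k (z : {ffun Pairs n.+1 -> C}) : (eL *m Nk k z) 0 L = 0.
Proof. by rewrite eLmul !mxE eqxx. Qed.

Lemma Nk_odd_col k (z : {ffun Pairs n.+1 -> C}) (y : 'rV[C]_n.+1) : odd k -> (y *m Nk k z) 0 L = 0.
Proof.
move=> ok; rewrite mxE big1 // => i _; rewrite mxE ok.
case: eqP => _; first by rewrite mulr0.
by rewrite ltnNge leq_ord mulr0.
Qed.

Lemma bad_ex (z : {ffun Pairs n.+1 -> C}) : ~ good z -> exists2 j : 'I_n.+1, (j < L)%N & zget z j L != 0.
Proof.
move=> ng; have [p hp] := not_all_ex_not _ _ ng.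
have [e nz] := imply_to_and _ _ hp.
clear hp; case: p e nz => [[i j] lt] /= e nz.
have ej : j = L by apply: val_inj.
subst j; exists i => //; rewrite zget_lt; apply/eqP => h; apply: nz.
by rewrite -h; congr (z _); apply: val_inj.
Qed.

Lemma Mk_bad_odd k (z : {ffun Pairs n.+1 -> C}) (j : 'I_n.+1) : odd k -> (j < L)%N -> zget z j L != 0 -> ~ rowL (Mk k z).
Proof.
move=> ok lt nz h; move: (congr1 (fun r : 'rV_n.+1 => r 0 j) h).
rewrite eLmul !mxE ok lt.
have -> : (j == L) = false by apply/eqP=> e; move: lt; rewrite e ltnn.
have -> : (L == j) = false by apply/eqP=> e; move: lt; rewrite -e ltnn.
by rewrite andbF => e; move: nz; rewrite e eqxx.
Qed.

Lemma Mk_even_entry k z (j : 'I_n.+1) : ~~ odd k -> (j < L)%N -> Mk k (z : {ffun Pairs n.+1 -> C}) j L = zget z j L.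
Proof.
move=> ok lt; rewrite mxE (negbTE ok) lt.
by have -> : (j == L) = false by apply/eqP=> e; move: lt; rewrite e ltnn.
Qed.

End Struct.
Arguments eL {C n}.

Section Seq.
Variable C : fieldType.
Variables n K : nat.
Local Notation L := (@ord_max n).
Variable Z : {ffun 'I_K.+1 -> {ffun Pairs n.+1 -> C}}.
Local Notation FW := {ffun 'I_K.+1 -> {ffun Pairs n.+1 -> C}}.

Lemma lastrowE (R : Type) m (A : 'M[R]_m.+1) : lastrow A = row ord_max A.
Proof. by []. Qed.

Definition Bn (i : nat) : 'M[C]_n.+1 := invmx (Mk i.+1 (Z (inord i))).
Definition Nn (W : FW) (i : nat) : 'M[C]_n.+1 := Nk i.+1 (W (inord i)).
Definition P0 (s : seq nat) := foldr (fun i A => Bn i *m A) 1%:M s.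
Fixpoint Dq (W : FW) (s : seq nat) : 'M[C]_n.+1 :=
  match s with
  | [::] => 0
  | i :: s' => - (Bn i *m Nn W i *m Bn i) *m P0 s' + Bn i *m Dq W s'
  end.
Definition ZtW (W : FW) : {ffun 'I_K.+1 -> {ffun Pairs n.+1 -> {poly C}}} :=
  [ffun k => [ffun p => (Z k p)%:P + W k p *: 'X]].
Definition Mp (W : FW) (i : nat) : 'M[{poly C}]_n.+1 := Mk i.+1 (ZtW W (inord i)).
Definition Pp (W : FW) (s : seq nat) :=
  foldr (fun i A => invmx (Mp W i) *m A) 1%:M s.

Lemma c0_Mp W i : c0 (Mp W i) = Mk i.+1 (Z (inord i)).
Proof.
apply/matrixP=> a b; rewrite !mxE.
case: eqP => _; first by rewrite coef1.
case: (odd _); case: ifP => _; rewrite ?coef0 //; rewrite /zget;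
  case: (insub _) => [p|] /=; rewrite ?coef0 // !ffunE coefD coefC coefZ coefX /=;
  by rewrite mulr0 addr0.
Qed.

Lemma c1_Mp W i : c1 (Mp W i) = Nn W i.
Proof.
apply/matrixP=> a b; rewrite !mxE.
case: eqP => _; first by rewrite coef1.
case: (odd _); case: ifP => _; rewrite ?coef0 //; rewrite /zget;
  case: (insub _) => [p|] /=; rewrite ?coef0 // !ffunE coefD coefC coefZ coefX /=;
  by rewrite mulr1 add0r.
Qed.

Lemma Pp_c W s : c0 (Pp W s) = P0 s /\ c1 (Pp W s) = Dq W s.
Proof.
elim: s => [|i s [IH0 IH1]] /=; first by rewrite c0_1 c1_1.
have [e0 e1] := c01_inv (Mk_unit (i.+1) (ZtW W (inord i))).
rewrite c0M c1M /Mp e0 e1 IH0 IH1 c0_Mp c1_Mp; split=> //.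
by rewrite addrC mulNmx.
Qed.

Lemma enum_iota : enum 'I_K.+1 = map inord (iota 0 K.+1).
Proof.
rewrite -val_enum_ord -map_comp; symmetry.
by rewrite (eq_map (g := id)) ?map_id // => i /=; exact: inord_val.
Qed.

Lemma dPhi_eq W : dPhiK Z W = eL *m Dq W (iota 0 K.+1).
Proof.
have eP : PsiK (ZtW W) = Pp W (iota 0 K.+1).
  rewrite /PsiK enum_iota foldr_map /Pp.
  have : all (fun i => i < K.+1)%N (iota 0 K.+1).
    by apply/allP=> i; rewrite mem_iota.
  elim: (iota 0 K.+1) => //= i s IH /andP[lt al]; rewrite IH //.
  by rewrite /Mp inordK.
have [_ e1] := Pp_c W (iota 0 K.+1).
have lr : forall A : 'M[{poly C}]_n.+1, lastrow A = row L A by [].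
rewrite -e1 eLmul; apply/rowP=> j; rewrite /dPhiK /PhiK eP lr !mxE //.
Qed.


Lemma P0_cat s t : P0 (s ++ t) = P0 s *m P0 t.
Proof. by elim: s => [|i s IH] /=; rewrite ?mul1mx // IH mulmxA. Qed.

Lemma P0_unit s : P0 s \in unitmx.
Proof.
elim: s => [|i s IH] /=; first exact: unitmx1.
by rewrite unitmx_mul IH andbT /Bn unitmx_inv Mk_unit.
Qed.

Definition Wlin (W1 W2 : FW) (c : C) : FW :=
  [ffun k => [ffun p => W1 k p + c * W2 k p]].

Lemma Nn_lin W1 W2 c i : Nn (Wlin W1 W2 c) i = Nn W1 i + c *: Nn W2 i.
Proof.
apply/matrixP=> a b; rewrite !mxE.
case: eqP => _; first by rewrite mulr0 addr0.
by case: (odd _); case: ifP => _; rewrite ?mulr0 ?addr0 //; rewrite /zget;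
  case: (insub _) => [p|] /=; rewrite ?mulr0 ?addr0 // !ffunE.
Qed.

Lemma Dq_lin W1 W2 c s : Dq (Wlin W1 W2 c) s = Dq W1 s + c *: Dq W2 s.
Proof.
elim: s => [|i s IH] /=; first by rewrite scaler0 addr0.
rewrite IH Nn_lin mulmxDr mulmxDl opprD mulmxDl mulmxDr.
rewrite -scalemxAr -scalemxAl -scalerN -scalemxAl -scalemxAr scalerDr.
by rewrite addrACA.
Qed.

Lemma Dq_zero W s : (forall i, i \in s -> Nn W i = 0) -> Dq W s = 0.
Proof.
elim: s => [|i s IH] //= h.
rewrite IH ?h ?inE ?eqxx // => [|j js]; last by apply: h; rewrite inE js orbT.
by rewrite mulmx0 mul0mx oppr0 mul0mx addr0.
Qed.

Lemma Dq_cat0 W pre s : (forall i, i \in pre -> Nn W i = 0) ->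
  Dq W (pre ++ s) = P0 pre *m Dq W s.
Proof.
elim: pre => [|i pre IH] h /=; first by rewrite mul1mx.
rewrite IH ?h ?inE ?eqxx // => [|j js]; last by apply: h; rewrite inE js orbT.
by rewrite mulmx0 mul0mx oppr0 mul0mx add0r mulmxA.
Qed.

Definition Wsing (i0 : 'I_K.+1) (w : {ffun Pairs n.+1 -> C}) : FW :=
  [ffun k => if k == i0 then w else [ffun _ => 0]].

Lemma Nn_sing0 (i0 : 'I_K.+1) w i : (i < K.+1)%N -> i != i0 -> Nn (Wsing i0 w) i = 0.
Proof.
move=> lt ne; rewrite /Nn ffunE.
have -> : (inord i == i0) = false.
  by apply/negbTE; apply: contra ne => /eqP <-; rewrite inordK.
apply/matrixP=> a b; rewrite !mxE.
by case: eqP => _ //; case: (odd _); case: ifP => _ //; rewrite /zget;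
  case: (insub _) => [p|] //=; rewrite ffunE.
Qed.

Lemma Nn_sing (i0 : 'I_K.+1) w : Nn (Wsing i0 w) i0 = Nk i0.+1 w.
Proof. by rewrite /Nn inord_val ffunE eqxx. Qed.

Lemma iota_split i : (i < K.+1)%N ->
  iota 0 K.+1 = iota 0 i ++ i :: iota i.+1 (K - i).
Proof.
move=> lt; rewrite -{1}(subnKC (ltnW lt)) iotaD add0n.
by rewrite subSn.
Qed.

Lemma Dq_sing (i0 : 'I_K.+1) w :
  Dq (Wsing i0 w) (iota 0 K.+1) =
  P0 (iota 0 i0) *m (- (Bn i0 *m Nk i0.+1 w *m Bn i0) *m P0 (iota i0.+1 (K - i0))).
Proof.
rewrite (iota_split (ltn_ord i0)) Dq_cat0; last first.
  by move=> i; rewrite mem_iota add0n => /andP[_ lt]; apply: Nn_sing0;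
    [apply: ltn_trans lt _ | apply: contraTneq lt => ->; rewrite ltnn].
rewrite /= Nn_sing Dq_zero ?mulmx0 ?addr0 //.
move=> i; rewrite mem_iota => /andP[le lt]; apply: Nn_sing0.
  by move: lt; rewrite addSn subnKC // -ltnS.
by rewrite neq_ltn le orbT.
Qed.

Lemma P0_split (i0 : 'I_K.+1) :
  P0 (iota 0 K.+1) = P0 (iota 0 i0) *m (Bn i0 *m P0 (iota i0.+1 (K - i0))).
Proof. by rewrite (iota_split (ltn_ord i0)) P0_cat. Qed.

End Seq.

Section Cons.
Variable C : fieldType.
Variable n : nat.
Local Notation L := (@ord_max n).

Definition wH (h : 'rV[C]_n.+1) : {ffun Pairs n.+1 -> C} :=
  [ffun p => if val (val p).2 == n then h 0 (val p).1 else 0].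
Definition wE (a b : 'I_n.+1) : {ffun Pairs n.+1 -> C} :=
  [ffun p => if val p == (a, b) then 1 else 0].

Lemma Nk_wH_entry k (h : 'rV[C]_n.+1) i j : odd k -> h 0 L = 0 ->
  Nk k (wH h) i j = if i == L then h 0 j else 0.
Proof.
move=> ok hL; rewrite mxE ok.
case: eqP => [->|ne].
  by case: eqP => [->|] //.
case: (ltnP j i) => lt.
  rewrite zget_lt ffunE /=.
  by case: (i =P L) => [->|ni]; [rewrite eqxx | case: eqP => // e; case: ni; apply: val_inj].
case: (i =P L) => // e; move: lt; rewrite e => lt.
have : (j <= n)%N by rewrite -ltnS.
move=> le; have ej : j = L by apply: val_inj; apply/eqP; rewrite eqn_leq le lt.
by case: ne; rewrite e ej.
Qed.

Lemma Nk_wH k (h r : 'rV[C]_n.+1) : odd k -> h 0 L = 0 ->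
  r *m Nk k (wH h) = r 0 L *: h.
Proof.
move=> ok hL; apply/rowP=> j; rewrite !mxE (bigD1 L) //= big1 ?addr0.
  by rewrite Nk_wH_entry // eqxx.
by move=> i /negbTE ni; rewrite Nk_wH_entry // ni mulr0.
Qed.

Lemma Nk_wE_even k (a : 'I_n.+1) (r : 'rV[C]_n.+1) : ~~ odd k -> (a < L)%N ->
  (r *m Nk k (wE a L)) 0 L = r 0 a.
Proof.
move=> ok lt; rewrite !mxE (bigD1 a) //= big1 ?addr0.
  rewrite mxE (negbTE ok) lt zget_lt ffunE /= eqxx.
  have -> : (a == L) = false by apply/eqP=> e; move: lt; rewrite e ltnn.
  by rewrite mulr1.
move=> i /negbTE ni; rewrite mxE (negbTE ok).
case: eqP => _; first by rewrite mulr0.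
case: ifP => li; last by rewrite mulr0.
rewrite zget_lt ffunE /=.
by rewrite xpair_eqE ni /= mulr0.
Qed.

Lemma Nk_wE_odd k (a : 'I_n.+1) (r : 'rV[C]_n.+1) : odd k -> (a < L)%N ->
  r *m Nk k (wE a L) = r 0 L *: delta_mx 0 a.
Proof.
move=> ok lt; apply/rowP=> j; rewrite !mxE (bigD1 L) //= big1 ?addr0.
  rewrite mxE ok; case: (j =P L) => [->|nj].
    have -> : (L == a) = false by apply/eqP=> e; move: lt; rewrite -e ltnn.
    by rewrite eqxx mulr0.
  have jL : (j < L)%N by apply: ltL; apply/eqP.
  rewrite jL zget_lt ffunE /= xpair_eqE eqxx andbT.
  have -> : (L == j) = false by apply/eqP=> e; apply: nj.
  by case: (j == a).
move=> i /negbTE ni; rewrite mxE ok.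
case: eqP => _; first by rewrite mulr0.
case: ifP => li; last by rewrite mulr0.
by rewrite zget_lt ffunE /= xpair_eqE ni andbF mulr0.
Qed.

End Cons.
Arguments wE {C n}.

Section Main.
Variable C : fieldType.
Variables n K : nat.
Local Notation L := (@ord_max n).
Variable Z : {ffun 'I_K.+1 -> {ffun Pairs n.+1 -> C}}.
Local Notation Bn := (Bn Z).
Local Notation P0 := (P0 Z).
Local Notation Dq := (Dq Z).

Lemma oppmxE (A : 'M[C]_(1, n.+1)) i j : (- A) i j = - A i j.
Proof. by rewrite mxE. Qed.
Lemma addmxE (A B : 'M[C]_(1, n.+1)) i j : (A + B) i j = A i j + B i j.
Proof. by rewrite mxE. Qed.

Lemma Bn_unit i : Bn i \in unitmx.
Proof. by rewrite /Bn unitmx_inv Mk_unit. Qed.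

Lemma rowL_Bn_good i : good (Z (inord i)) -> rowL (Bn i).
Proof. by move=> g; apply: rowL_inv; [exact: Mk_unit | exact: Mk_rowL_good]. Qed.
Lemma colL_Bn_good i : good (Z (inord i)) -> colL (Bn i).
Proof. by move=> g; apply: colL_inv; [exact: Mk_unit | exact: Mk_colL_good]. Qed.
Lemma colL_Bn_odd i : odd i.+1 -> colL (Bn i).
Proof. by move=> g; apply: colL_inv; [exact: Mk_unit | exact: Mk_colL_odd]. Qed.
Lemma rowL_Bn_even i : ~~ odd i.+1 -> rowL (Bn i).
Proof. by move=> g; apply: rowL_inv; [exact: Mk_unit | exact: Mk_rowL_even]. Qed.

Lemma P0_rowL s : (forall i, i \in s -> good (Z (inord i))) -> rowL (P0 s).
Proof.
elim: s => [|i s IH] h /=; first exact: rowL1.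
apply: rowLM; first by apply: rowL_Bn_good; apply: h; rewrite inE eqxx.
by apply: IH => j js; apply: h; rewrite inE js orbT.
Qed.
Lemma P0_colL s : (forall i, i \in s -> good (Z (inord i))) -> colL (P0 s).
Proof.
elim: s => [|i s IH] h /=; first exact: colL1.
apply: colLM; first by apply: colL_Bn_good; apply: h; rewrite inE eqxx.
by apply: IH => j js; apply: h; rewrite inE js orbT.
Qed.

Lemma nonsurj_aux W : forall b a, (a + b = K)%N ->
  (forall i, (a <= i < K)%N -> good (Z (inord i))) ->
  exists2 h : 'rV[C]_n.+1, h 0 L = 0 &
    eL *m Dq W (iota a b ++ [:: K]) = h *m Bn K.
Proof.
elim=> [|b IH] a e g.
  rewrite addn0 in e; subst a => /=.
  exists (- (eL *m Bn K *m Nn W K)).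
    rewrite oppmxE; apply/eqP; rewrite oppr_eq0; apply/eqP.
    case: (boolP (odd K.+1)) => ok; first by rewrite /Nn Nk_odd_col.
    by rewrite (rowL_Bn_even ok) /Nn Nk_LL.
  by rewrite mulmx1 mulmx0 addr0 mulmxN mulNmx !mulmxA.
have e' : (a.+1 + b = K)%N by rewrite addSnnS.
have g' : forall i, (a.+1 <= i < K)%N -> good (Z (inord i)).
  by move=> i /andP[l1 l2]; apply: g; rewrite (ltnW l1).
have [h hL eh] := IH a.+1 e' g'.
  exists (- (eL *m Nn W a *m Bn a *m P0 (iota a.+1 b)) + h).
    rewrite addmxE hL addr0 oppmxE; apply/eqP; rewrite oppr_eq0; apply/eqP.
    rewrite -mulmxA (colLM (colL_Bn_good _) (P0_colL _)) ?Nk_LL //.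
      by apply: g; rewrite leqnn -e -addSnnS leq_addr.
    move=> i; rewrite mem_iota => /andP[l1 l2]; apply: g.
    by rewrite (ltnW l1) -e -addSnnS.
  have ga : good (Z (inord a)) by apply: g; rewrite leqnn -e -addSnnS leq_addr.
  rewrite /= mulmxDr [X in _ + X = _]mulmxA (rowL_Bn_good ga) eh.
  rewrite P0_cat /= mulmx1 mulmxDl; congr (_ + _).
  by rewrite mulNmx mulmxN mulNmx !mulmxA (rowL_Bn_good ga).
Qed.


Lemma iota_last : iota 0 K.+1 = iota 0 K ++ [:: K].
Proof. by rewrite -addn1 iotaD. Qed.

Lemma nonsurj : (forall i, (i < K)%N -> good (Z (inord i))) ->
  ~ (forall v : 'rV[C]_n.+1, exists W, dPhiK Z W = v).
Proof.
move=> g surj; have [W eW] := surj (eL *m Bn K).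
rewrite dPhi_eq iota_last in eW.
have [h hL eh] := nonsurj_aux W (add0n K) (fun i hi => g i (proj2 (andP hi))).
rewrite eh in eW.
have ehL : h = eL.
  have := congr1 (fun X => X *m invmx (Bn K)) eW => /=.
  by rewrite -!mulmxA mulmxV ?Bn_unit // !mulmx1.
by move: hL; rewrite ehL mxE !eqxx => /eqP; rewrite oner_eq0.
Qed.

Lemma u_gen (i0 : 'I_K.+1) w (y : 'rV[C]_n.+1) :
  y *m P0 (iota 0 i0) = - (eL *m P0 (iota 0 i0) *m Bn i0 *m Nk i0.+1 w) ->
  eL *m Dq (Wsing i0 w) (iota 0 K.+1) = y *m P0 (iota 0 K.+1).
Proof.
move=> hy; rewrite Dq_sing (P0_split _ i0) [RHS]mulmxA hy.
by rewrite !mulNmx !mulmxN !mulmxA.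
Qed.

Lemma ker_part (h : 'rV[C]_n.+1) : h 0 L = 0 ->
  exists W, eL *m Dq W (iota 0 K.+1) = h *m P0 (iota 0 K.+1).
Proof.
move=> hL; exists (Wsing ord0 (wH (- h))); apply: u_gen => /=.
rewrite !mulmx1 Nk_wH //; last by rewrite oppmxE hL oppr0.
have -> : (eL *m Bn 0) 0 L = 1 by rewrite colL_Bn_odd // mxE !eqxx.
by rewrite scale1r opprK.
Qed.

Lemma u_part m : (m < K)%N -> ~ good (Z (inord m)) ->
  (forall i, (i < m)%N -> good (Z (inord i))) ->
  exists W, exists2 yu : 'rV[C]_n.+1,
    eL *m Dq W (iota 0 K.+1) = yu *m P0 (iota 0 K.+1) & yu 0 L != 0.
Proof.
move=> ltm bad gm.
have lt1 : (m.+1 < K.+1)%N by [].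
pose i0 : 'I_K.+1 := inord m.+1.
have vi0 : nat_of_ord i0 = m.+1 := inordK lt1.
have [j0 j0L nz] := bad_ex bad.
have P0m : P0 (iota 0 m.+1) = P0 (iota 0 m) *m Bn m.
  have ei : iota 0 m.+1 = iota 0 m ++ [:: m] by rewrite -addn1 iotaD.
  by rewrite ei P0_cat /= mulmx1.
have gim : forall i, i \in iota 0 m -> good (Z (inord i)).
  by move=> i; rewrite mem_iota add0n => /gm.
case: (boolP (odd m.+1)) => om.
  pose r := eL *m P0 (iota 0 m.+1) *m Bn m.+1.
  have rdef : r = eL *m P0 (iota 0 m.+1) *m Bn m.+1 by [].
  clearbody r.
  have [i1 i1L ri1] : exists2 i1 : 'I_n.+1, (i1 < L)%N & r 0 i1 != 0.
    apply: NNPP => nex.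
    have r0 : forall i1 : 'I_n.+1, (i1 < L)%N -> r 0 i1 = 0.
      move=> i1 lt; apply: NNPP => ne; apply: nex; exists i1 => //; exact/eqP.
    have er : r = r 0 L *: eL.
      apply/rowP=> j; rewrite [in RHS]mxE [eL 0 j]mxE !eqxx /=.
      case: (j =P L) => [->|nj]; first by rewrite mulr1.
      by rewrite r0 ?mulr0 //; apply: ltL; apply/eqP.
    have ea : eL *m Bn m = r 0 L *: eL.
      have : r *m Mk m.+2 (Z (inord m.+1)) = eL *m Bn m.
        by rewrite rdef P0m mulmxA (P0_rowL gim) mulmxKV // Mk_unit.
      move=> <-; rewrite {1}er -scalemxAl Mk_rowL_even //; by move: om; rewrite /= !negbK.
    have eM : eL = r 0 L *: (eL *m Mk m.+1 (Z (inord m))).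
      by rewrite scalemxAl -ea mulmxKV // Mk_unit.
    have r1 : r 0 L = 1.
      have eM' := eM; rewrite eLmul in eM'.
      have := congr1 (fun X : 'rV[C]_n.+1 => X 0 L) eM' => /=.
      by rewrite !mxE !eqxx /= mulr1 => <-.
    rewrite r1 scale1r in eM.
    by apply: (Mk_bad_odd om j0L nz); rewrite /rowL -eM.
  exists (Wsing i0 (wE i1 L)).
  exists (- (r *m Nk m.+2 (wE i1 L)) *m invmx (P0 (iota 0 m.+1))).
    by apply: u_gen; rewrite vi0 mulmxKV ?P0_unit // rdef.
  have cP : colL (invmx (P0 (iota 0 m.+1))).
    apply: colL_inv; first exact: P0_unit.
    by rewrite P0m; apply: colLM; [exact: P0_colL | exact: colL_Bn_odd].
  rewrite cP oppmxE oppr_eq0 Nk_wE_even //.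
  by move: om; rewrite /= !negbK.
have om2 : odd m.+2 by exact: om.
pose r := eL *m P0 (iota 0 m.+1) *m Bn m.+1.
have er : r = eL *m Bn m.+1.
  by rewrite /r P0m mulmxA (P0_rowL gim) (rowL_Bn_even om).
have rL : r 0 L = 1 by rewrite er colL_Bn_odd // mxE !eqxx.
exists (Wsing i0 (wE j0 L)).
exists (- (delta_mx 0 j0 *m Mk m.+1 (Z (inord m))) *m invmx (P0 (iota 0 m))).
  apply: u_gen; rewrite vi0 -/r Nk_wE_odd // rL scale1r P0m mulmxA mulmxKV ?P0_unit //.
  by rewrite mulNmx -mulmxA mulmxV ?Mk_unit // mulmx1.
have cP2 : colL (invmx (P0 (iota 0 m))) := colL_inv (P0_unit _ _) (P0_colL gim).
rewrite cP2 oppmxE oppr_eq0 -rowE mxE.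
by rewrite Mk_even_entry.
Qed.

Lemma surj m : (m < K)%N -> ~ good (Z (inord m)) ->
  (forall i, (i < m)%N -> good (Z (inord i))) ->
  forall v : 'rV[C]_n.+1, exists W, dPhiK Z W = v.
Proof.
move=> ltm bad gm v.
have [Wu [yu eu yuL]] := u_part ltm bad gm.
have uP : P0 (iota 0 K.+1) \in unitmx := P0_unit _ _.
pose x := v *m invmx (P0 (iota 0 K.+1)).
pose c := x 0 L / yu 0 L.
have hL : (x - c *: yu) 0 L = 0.
  by rewrite addmxE oppmxE [(c *: yu) 0 L]mxE /c divfK // subrr.
have [Wh eh] := ker_part hL.
exists (Wlin Wh Wu c).
rewrite dPhi_eq Dq_lin mulmxDr eh -scalemxAr eu scalemxAl -mulmxDl subrK.
by rewrite /x mulmxKV.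
Qed.

End Main.

Theorem lemma2p5 (C : numClosedFieldType) (n K : nat)
  (hn : (2 <= n)%N) (hK : (2 <= K)%N)
  (Z : {ffun 'I_K -> {ffun Pairs n -> C}}) :
  (forall v : 'rV[C]_n,
     exists W : {ffun 'I_K -> {ffun Pairs n -> C}}, dPhiK Z W = v)
  <-> ~ in_SK Z 0.
Proof.
case: n hn Z => [|n] // hn; case: K hK => [|K] // hK Z.
have eS : in_SK Z 0 <-> (forall i, (i < K)%N -> good (Z (inord i))).
  split.
    move=> S i lt p e; have lt' : (i < K.+1)%N by apply: ltnW.
    by apply: (S (inord i)) => //; rewrite inordK.
  by move=> g k lt p e; have := g k lt; rewrite inord_val => gk; exact: gk p e.
split.
  by move=> su S; apply: (nonsurj (proj1 eS S)) su.
move=> nS.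
have [i [ilt ng]] : exists i, (i < K)%N /\ ~ good (Z (inord i)).
  apply: NNPP => h; apply: nS; apply/eS => i lt; apply: NNPP => ngi.
  by apply: h; exists i.
have minm : forall i, (i < K)%N -> ~ good (Z (inord i)) ->
    exists m, [/\ (m < K)%N, ~ good (Z (inord m)) &
                  forall j, (j < m)%N -> good (Z (inord j))].
  elim/ltn_ind => i0 IH lt0 ng0.
  case: (classic (forall j, (j < i0)%N -> good (Z (inord j)))) => [al|nal].
    by exists i0.
  have [j hj] := not_all_ex_not _ _ nal.
  have [jlt ngj] := imply_to_and _ _ hj.
  exact: IH j jlt (ltn_trans jlt lt0) ngj.
have [m [mlt mng mg]] := minm i ilt ng.
exact: surj mlt mng mg.
Qed.
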